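(* Let $\Pi$ be a matroid secretary problem on a fixed finite matroid, whose instances are assignments of positive weights to the matroid elements. There is a bijection $B$ between probability distributions with finite support over instances of $\Pi$ such that, for every such $D$ and every $r$, there exists an algorithm with type 2 performance guarantee $r$ on $D$ if and only if there exists an algorithm with type 3 performance guarantee $r$ on $B(D)$.
   Context: In the matroid secretary problem the elements of a matroid arrive in uniformly random order revealing their weights; the algorithm must irrevocably accept or reject each on arrival, keeping the accepted set independent. For an instance $I$, $a(I)$ is the set accepted by algorithm $a$, $opt(I)$ a maximum-weight independent set, and $w(X)$ the total weight of $X$. Algorithm $a$ has type 2 performance guarantee $r$ on a distribution $D$ if $\mathbb{E}_{I\sim D}[w(a(I))/w(opt(I))]\ge r$, and type 3 performance guarantee $r$ on $D$ if $\mathbb{E}_{I\sim D}[w(a(I))]\ge r\cdot\mathbb{E}_{I\sim D}[w(opt(I))]$; the expectations of $w(a(I))$ are also over the random arrival order and the algorithm's randomness. *)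

(* Defs.v *)
From HB Require Import structures.
From mathcomp Require Import all_boot all_order all_algebra all_fingroup.
From mathcomp Require Import finmap.
From mathcomp Require Import reals.
Set Implicit Arguments. Unset Strict Implicit. Unset Printing Implicit Defensive.
Import Order.TTheory GRing.Theory Num.Theory.
Local Open Scope ring_scope.

Section MatroidSecretary.
Variables (R : realType) (E : finType).

Definition is_matroid (indep : {set E} -> bool) : Prop :=
  [/\ indep set0,
      (forall A B : {set E}, A \subset B -> indep B -> indep A) &
      (forall A B : {set E}, indep A -> indep B -> (#|A| < #|B|)%N ->
         exists2 e, e \in B :\: A & indep (e |: A))].

Definition weights := {ffun E -> R}.
Definition is_instance (w : weights) : bool := [forall e, 0 < w e].

Definition wsum (w : weights) (A : {set E}) : R := \sum_(e in A) w e.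

Definition opt_val (indep : {set E} -> bool) (w : weights) : R :=
  \big[Num.max/0]_(A : {set E} | indep A) wsum w A.

Definition is_fdist (D : {fsfun weights -> R with 0}) : bool :=
  all (fun w => (0 < D w) && is_instance w) (finsupp D) &&
  (\sum_(w <- finsupp D) D w == 1).

Definition fdist := {D : {fsfun weights -> R with 0} | is_fdist D}.

Definition fexp (D : fdist) (f : weights -> R) : R :=
  \sum_(w <- finsupp (val D)) val D w * f w.

(* A deterministic online algorithm: given the history of revealed
   (element, weight) pairs so far, the arriving element and its weight,
   decide whether to accept it. *)
Definition det_alg := seq (E * R) -> E -> R -> bool.

Fixpoint run_aux (indep : {set E} -> bool) (a : det_alg) (w : weights)
    (hist : seq (E * R)) (A : {set E}) (s : seq E) : {set E} :=
  match s with
  | [::] => A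
  | e :: s' =>
      let acc := a hist e (w e) && indep (e |: A) in
      run_aux indep a w (rcons hist (e, w e)) (if acc then e |: A else A) s'
  end.

Definition run indep (a : det_alg) (w : weights) (s : seq E) : {set E} :=
  run_aux indep a w [::] set0 s.

(* Arrival orders: uniformly random; p : {perm E} gives order map p (enum E). *)
Definition arrival (p : {perm E}) : seq E := [seq p x | x <- enum E].

Definition avg_perm (f : {perm E} -> R) : R :=
  (#|{perm E}|%:R)^-1 * \sum_(p : {perm E}) f p.

(* A (randomized) algorithm: a finite-support probability mixture of
   deterministic algorithms. *)
Definition alg := seq (R * det_alg).
Definition valid_alg (a : alg) : Prop :=
  all (fun x : R => 0 <= x) (map fst a) /\ \sum_(q <- a) q.1 = 1.

Definition alg_exp (a : alg) (f : {perm E} -> det_alg -> R) : R :=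
  \sum_(q <- a) q.1 * avg_perm (fun p => f p q.2).

Definition type2 indep (a : alg) (D : fdist) (r : R) : Prop :=
  fexp D (fun w => alg_exp a (fun p d =>
            wsum w (run indep d w (arrival p)) / opt_val indep w)) >= r.

Definition type3 indep (a : alg) (D : fdist) (r : R) : Prop :=
  fexp D (fun w => alg_exp a (fun p d => wsum w (run indep d w (arrival p))))
    >= r * fexp D (fun w => opt_val indep w).

End MatroidSecretary.

(* Main.v *)
Require Import Defs.
From HB Require Import structures.
From mathcomp Require Import all_boot all_order all_algebra all_fingroup.
From mathcomp Require Import finmap.
From mathcomp Require Import reals.
From mathcomp Require Import ring.
Set Implicit Arguments. Unset Strict Implicit. Unset Printing Implicit Defensive.
Import Order.TTheory GRing.Theory Num.Theory.
Local Open Scope ring_scope.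

Section S.
Variables (R : realType) (E : finType).
Implicit Types (D : fdist R E) (c : weights R E -> R).

Lemma fd_prop D w : w \in finsupp (val D) -> 0 < val D w /\ is_instance w.
Proof.
case: D => D /= /andP[/allP H _] /H /andP[]; by [].
Qed.

Lemma fd_sum D : \sum_(w <- finsupp (val D)) val D w = 1.
Proof. by case: D => D /= /andP[_ /eqP]. Qed.

Definition Zc c D := \sum_(w <- finsupp (val D)) val D w * c w.

Lemma Zc_pos c D : (forall w, is_instance w -> 0 < c w) -> 0 < Zc c D.
Proof.
move=> hc; rewrite /Zc.
suff key : forall s : seq (weights R E), (forall w, w \in s -> 0 < val D w /\ is_instance w) ->
  \sum_(w <- s) val D w = 1 -> 0 < \sum_(w <- s) val D w * c w.
  by apply: key; [exact: fd_prop | exact: fd_sum].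
elim => [|x s IH] /= hp; first by rewrite big_nil => /eqP; rewrite eq_sym oner_eq0.
rewrite !big_cons => _.
have [h1 h2] := hp x (mem_head _ _).
apply: ltr_wpDr; last by apply: mulr_gt0 => //; apply: hc.
rewrite big_seq; apply: sumr_ge0 => w ws.
have [h3 h4] := hp w (@mem_behead _ (x :: s) _ ws).
by apply/ltW/mulr_gt0 => //; apply: hc.
Qed.

Definition scalef c D : {fsfun weights R E -> R with 0} :=
  [fsfun w in finsupp (val D) => val D w * c w / Zc c D].

Lemma scalefE c D w : scalef c D w =
  if w \in finsupp (val D) then val D w * c w / Zc c D else 0.
Proof. by rewrite /scalef fsfun_fun. Qed.

Lemma scalef_supp c D : (forall w, is_instance w -> 0 < c w) ->
  finsupp (scalef c D) = finsupp (val D).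
Proof.
move=> hc; apply/fsetP => w; rewrite mem_finsupp scalefE.
case: ifP => [ws|]; last by rewrite eqxx.
have [h1 h2] := fd_prop ws.
by rewrite gt_eqF // !mulr_gt0 ?invr_gt0 ?Zc_pos ?hc.
Qed.

Lemma scalef_fdist c D : (forall w, is_instance w -> 0 < c w) ->
  is_fdist (scalef c D).
Proof.
move=> hc; apply/andP; split; rewrite scalef_supp //.
  apply/allP => w ws; have [h1 h2] := fd_prop ws.
  by rewrite scalefE ws h2 andbT !mulr_gt0 ?invr_gt0 ?Zc_pos ?hc.
apply/eqP; rewrite big_seq (eq_bigr (fun w => val D w * c w / Zc c D)); last first.
  by move=> w ws; rewrite scalefE ws.
rewrite -big_seq -mulr_suml -/(Zc c D) divff //.
by rewrite gt_eqF // Zc_pos.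
Qed.

Definition scale c (hc : forall w, is_instance w -> 0 < c w) D : fdist R E :=
  exist _ (scalef c D) (scalef_fdist D hc).

Lemma fexp_scale c (hc : forall w, is_instance w -> 0 < c w) D f :
  fexp (scale hc D) f = (Zc c D)^-1 * \sum_(w <- finsupp (val D)) val D w * c w * f w.
Proof.
rewrite /fexp /= scalef_supp // mulr_sumr big_seq [RHS]big_seq.
apply: eq_bigr => w ws; rewrite scalefE ws.
by rewrite /=; ring.
Qed.

Lemma scaleK c c' (hc : forall w, is_instance w -> 0 < c w)
  (hc' : forall w, is_instance w -> 0 < c' w) :
  (forall w, is_instance w -> c w * c' w = 1) ->
  cancel (scale hc) (scale hc').
Proof.
move=> hcc D; apply: val_inj => /=; apply/fsfunP => w.
have eZ : Zc c' (scale hc D) = (Zc c D)^-1.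
  rewrite /Zc /= scalef_supp // -[RHS]mulr1 -(fd_sum D) mulr_sumr big_seq [RHS]big_seq.
  apply: eq_bigr => v vs; rewrite scalefE vs.
  have [_ hv] := fd_prop vs.
  by rewrite -[in RHS](mulr1 (sval D v)) -(hcc v hv); ring.
rewrite scalefE /= scalef_supp //; case: ifPn => ws.
  rewrite eZ invrK scalefE ws.
  have [_ hv] := fd_prop ws.
  have hZ : Zc c D != 0 by rewrite gt_eqF // Zc_pos.
  rewrite -[in RHS](mulr1 (sval D w)) -(hcc w hv) -[in RHS](mulr1 (sval D w * _)) -(mulfV hZ).
  by rewrite /=; ring.
by rewrite fsfun_dflt.
Qed.


Lemma le_bigmax_seq (I : eqType) (s : seq I) (P : pred I) (F : I -> R) x :
  x \in s -> P x -> F x <= \big[Num.max/0]_(i <- s | P i) F i.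
Proof.
elim: s => [|y s IH] //= ; rewrite inE big_cons => /orP[/eqP <-|xs] Px.
  by rewrite Px le_max lexx.
case: ifP => _; last exact: IH.
by rewrite le_max IH ?orbT.
Qed.

Lemma opt_pos (indep : {set E} -> bool) (w : weights R E) :
  (exists e : E, indep [set e]) -> is_instance w -> 0 < opt_val indep w.
Proof.
move=> [e he] /forallP hw.
apply: (lt_le_trans (hw e)).
have -> : w e = wsum w [set e] by rewrite /wsum big_set1.
exact: (@le_bigmax_seq _ (index_enum _) indep (wsum w) [set e] (mem_index_enum _) he).
Qed.

Lemma alg_exp_mulr (a : alg R E) (f : {perm E} -> det_alg R E -> R) k :
  alg_exp a (fun p d => f p d * k) = alg_exp a f * k.
Proof.
rewrite /alg_exp mulr_suml; apply: eq_bigr => q _.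
rewrite /avg_perm -mulr_suml -!mulrA; congr (_ * (_ * _)).
Qed.

End S.

Theorem lemma5p9 (R : realType) (E : finType) (indep : {set E} -> bool)
  (hM : is_matroid indep) (hrank : exists e : E, indep [set e]) :
  exists B : fdist R E -> fdist R E,
    bijective B /\
    forall (D : fdist R E) (r : R),
      (exists a : alg R E, valid_alg a /\ type2 indep a D r) <->
      (exists a : alg R E, valid_alg a /\ type3 indep a (B D) r).
Proof.
pose o := @opt_val R E indep.
have ho : forall w, is_instance w -> 0 < o w by move=> w; exact: opt_pos.
have hc : forall w, is_instance w -> 0 < (o w)^-1 by move=> w hw; rewrite invr_gt0 ho.
exists (scale hc); split.
  exists (scale ho); apply: scaleK => w hw.
    by rewrite mulVf // gt_eqF // ho.
  by rewrite mulfV // gt_eqF // ho.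
move=> D r.
set Aw := fun (a : alg R E) (w : weights R E) =>
  alg_exp a (fun p d => wsum w (run indep d w (arrival p))).
have key : forall a, type2 indep a D r <-> type3 indep a (scale hc D) r.
  move=> a; rewrite /type2 /type3 !fexp_scale.
  have e1 : fexp D (fun w => alg_exp a (fun p d => wsum w (run indep d w (arrival p)) / opt_val indep w))
     = \sum_(w <- finsupp (val D)) val D w * (o w)^-1 * Aw a w.
    rewrite /fexp; apply: eq_bigr => w _; rewrite alg_exp_mulr /Aw /o; ring.
  have e2 : \sum_(w <- finsupp (val D)) val D w * (o w)^-1 * opt_val indep w = 1.
    rewrite -(fd_sum D) big_seq [RHS]big_seq; apply: eq_bigr => w ws.
    have [_ hw] := fd_prop ws.
    by rewrite -mulrA mulVf ?mulr1 // gt_eqF // ho.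
  rewrite e1 e2 mulr1 -/(Aw a).
  have hZ : 0 < (Zc (fun w => (o w)^-1) D)^-1 by rewrite invr_gt0 Zc_pos.
  rewrite [(Zc _ D)^-1 * _]mulrC ler_pM2r //.

by split => -[a [va h]]; exists a; split => //; apply/key.
Qed.
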